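(* Let $j=\sqrt{-1}$, $\zeta_8=e^{2\pi j/8}$, and let $\sigma$ be the automorphism of $\mathbb{Q}(\zeta_8)$ fixing $\mathbb{Q}(j)$ with $\sigma(\zeta_8)=-\zeta_8$. For $a\in\mathbb{Z}[\zeta_8]$ and $b\in\mathbb{Z}[j]$ define the $3\times 2$ matrix $$X=\begin{pmatrix} X_S\\ X_T\end{pmatrix}=\begin{pmatrix} a & b\\ \sigma(a) & -b^*\\ b & \sigma(a)^*\end{pmatrix},$$ where $X_S=(a\ \ b)$ is the first row and $X_T=\begin{pmatrix} \sigma(a) & -b^*\\ b & \sigma(a)^*\end{pmatrix}$ consists of the last two rows. Then for every $(a,b)\neq(0,0)$: (i) $\det(X^\dagger X)\geq 1$ (so the code $\{X\}$ has the non-vanishing determinant property), and (ii) $\det(X_S X_S^\dagger)\,\det(X_T X_T^\dagger)\neq 0$ (full diversity in the parallel channel).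
   Context: $c^*$ denotes the complex conjugate of $c\in\mathbb{C}$ (elements of $\mathbb{Q}(\zeta_8)$ are viewed as complex numbers), and $M^\dagger$ denotes the conjugate transpose of a complex matrix $M$. $\mathbb{Z}[\zeta_8]$ is the ring of integers of $\mathbb{Q}(\zeta_8)$ and $\mathbb{Z}[j]$ the ring of Gaussian integers. $\mathbb{Q}(\zeta_8)/\mathbb{Q}(j)$ is a cyclic extension of degree 2 with Galois group generated by $\sigma$, and $a\sigma(a)$ is the relative norm of $a$, which lies in $\mathbb{Z}[j]$ for $a\in\mathbb{Z}[\zeta_8]$. *)

(* Defs.v *)
From mathcomp Require Import all_boot all_order all_algebra all_field.
Set Implicit Arguments. Unset Strict Implicit. Unset Printing Implicit Defensive.
Import Order.TTheory GRing.Theory Num.Theory.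
Local Open Scope ring_scope.

(* zeta8 = e^{2 pi j / 8} = (1 + j)/sqrt 2 *)
Definition zeta8 : algC := (1 + 'i) / sqrtC 2.

(* An element of Z[zeta8] given by its integer coordinates on the
   (integral) power basis 1, zeta8, zeta8^2, zeta8^3. *)
Definition Zz8 (c : 'I_4 -> int) : algC :=
  \sum_(k < 4) (c k)%:~R * zeta8 ^+ k.

(* sigma : Q(zeta8) -> Q(zeta8), fixing Q(j), zeta8 |-> - zeta8,
   applied to the element with coordinates c. *)
Definition sigma8 (c : 'I_4 -> int) : algC :=
  \sum_(k < 4) (c k)%:~R * (- zeta8) ^+ k.

Definition Zi (b0 b1 : int) : algC := b0%:~R + b1%:~R * 'i.

Definition adj_mx (m n : nat) (M : 'M[algC]_(m, n)) : 'M[algC]_(n, m) :=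
  (map_mx (fun z => z^*) M)^T.

Definition XS (a b : algC) : 'M[algC]_(1, 2) :=
  \matrix_(i < 1, j < 2) (if (j == 0 :> nat) then a else b).

Definition XT (sa b : algC) : 'M[algC]_(2, 2) :=
  \matrix_(i < 2, j < 2)
    (if (i == 0 :> nat) then (if (j == 0 :> nat) then sa else - b^*)
     else (if (j == 0 :> nat) then b else sa^*)).

Definition Xmat (a sa b : algC) : 'M[algC]_(3, 2) := col_mx (XS a b) (XT sa b).

(* Main.v *)
Require Import Defs.
From mathcomp Require Import all_boot all_order all_algebra all_field.
From mathcomp Require Import zify ring lra.
Import Order.TTheory GRing.Theory Num.Theory.
Local Open Scope ring_scope.

Lemma det2 (R : comNzRingType) (M : 'M[R]_2) : \det M = M 0 0 * M 1 1 - M 0 1 * M 1 0.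
Proof.
rewrite (expand_det_row _ 0) !big_ord_recl big_ord0 /cofactor !det_mx11 !mxE /=.
rewrite addr0 expr0 mul1r expr1 mulN1r.
rewrite mulrN; congr (M _ _ * M _ _ - M _ _ * M _ _); exact/val_inj.
Qed.

Lemma adj_col (m1 m2 n : nat) (A : 'M[algC]_(m1,n)) (B : 'M[algC]_(m2,n)) :
  adj_mx (col_mx A B) = row_mx (adj_mx A) (adj_mx B).
Proof. by rewrite /adj_mx map_col_mx tr_col_mx. Qed.

Lemma XX (a sa b : algC) : adj_mx (Xmat a sa b) *m Xmat a sa b =
   adj_mx (XS a b) *m XS a b + adj_mx (XT sa b) *m XT sa b.
Proof. rewrite -mul_row_col -adj_col. by []. Qed.

Lemma detX (a sa b : algC) : \det (adj_mx (Xmat a sa b) *m Xmat a sa b) =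
  (a * a^* + sa * sa^* + b * b^*) * (2 * (b * b^*) + sa * sa^*) - (a*a^*) * (b * b^*).
Proof.
rewrite XX det2 !mxE !big_ord_recl !big_ord0 !mxE /=.
rewrite !raddfN /= !conjCK. ring.
Qed.

Lemma detS (a b : algC) : \det (XS a b *m adj_mx (XS a b)) = a * a^* + b * b^*.
Proof. rewrite det_mx11 !mxE !big_ord_recl !big_ord0 !mxE /=. by rewrite addr0. Qed.
Lemma detT (sa b : algC) : \det (XT sa b *m adj_mx (XT sa b)) = (sa * sa^* + b * b^*)^+2.
Proof. rewrite det2 !mxE !big_ord_recl !big_ord0 !mxE /=. rewrite !raddfN /= !conjCK. ring. Qed.
Lemma par (x : int) : exists k, x = 2*k \/ x = 2*k+1.
Proof. exists (x %/ 2)%Z. lia. Qed.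

Lemma descent (n : nat) : forall c0 c1 c2 c3 : int,
  c0*c0+c1*c1+c2*c2+c3*c3 <= n%:Z ->
  c0*c0+c2*c2 = c1*c1+c3*c3 -> (c1-c3)*c2 = (c1+c3)*c0 ->
  [/\ c0 = 0, c1 = 0, c2 = 0 & c3 = 0].
Proof.
elim: n => [|n IH] c0 c1 c2 c3 Hs E1 E2.
  split; nia.
have [k0 [e0|e0]] := par c0; have [k1 [e1|e1]] := par c1;
have [k2 [e2|e2]] := par c2; have [k3 [e3|e3]] := par c3;
  subst c0 c1 c2 c3; try (exfalso; lia).
have [] := IH k0 k1 k2 k3; [lia|lia|lia|]. by move=> -> -> -> ->; rewrite mulr0.
Qed.

Definition tt : algC := (sqrtC 2)^-1.
Lemma ttE : tt * tt = 2^-1.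
Proof. by rewrite /tt -invfM -expr2 sqrtCK. Qed.
Lemma tt_real : tt \is Num.real.
Proof. by apply: ger0_real; rewrite /tt invr_ge0 sqrtC_ge0 ler0n. Qed.
Lemma tt_conj : tt^* = tt.
Proof. exact: conj_Creal tt_real. Qed.
Lemma z1 : zeta8 = tt + 'i * tt.
Proof. rewrite /zeta8 /tt; ring. Qed.
Lemma ii : 'i * 'i = -1 :> algC.
Proof. by rewrite -expr2 sqrCi. Qed.
Lemma z2 : zeta8 ^+ 2 = 'i.
Proof.
rewrite z1 (_ : (tt + 'i * tt)^+2 = 2*'i*(tt*tt) + (tt*tt)*('i*'i + 1)); last by ring.
rewrite ii ttE addNr mulr0 addr0; by field.
Qed.
Lemma z3 : zeta8 ^+ 3 = 'i * tt - tt.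
Proof.
rewrite exprS z2 z1 (_ : (tt + 'i * tt) * 'i = 'i * tt - tt + tt * ('i*'i + 1)); last by ring.
by rewrite ii addNr mulr0 addr0.
Qed.

Definition re (x0 x1 x3 : int) : algC := x0%:~R + (x1%:~R - x3%:~R) * tt.
Definition im (x2 x1 x3 : int) : algC := x2%:~R + (x1%:~R + x3%:~R) * tt.
Definition re' (x0 x1 x3 : int) : algC := x0%:~R - (x1%:~R - x3%:~R) * tt.
Definition im' (x2 x1 x3 : int) : algC := x2%:~R - (x1%:~R + x3%:~R) * tt.

Lemma Zz8E (c : 'I_4 -> int) : Zz8 c = re (c 0) (c 1) (c 3) + 'i * im (c 2) (c 1) (c 3).
Proof.
rewrite /Zz8 !big_ord_recl big_ord0 /=.
have L1 : lift ord0 ord0 = 1 :> 'I_4 by apply/val_inj.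
have L2 : lift ord0 (lift ord0 ord0) = 2 :> 'I_4 by apply/val_inj.
have L3 : lift ord0 (lift ord0 (lift ord0 ord0)) = 3 :> 'I_4 by apply/val_inj.
rewrite L1 L2 L3 /bump /= expr0 expr1 z2 z3 z1 /re /im (_ : ord0 = 0) //.
ring.
Qed.
Lemma sigma8E (c : 'I_4 -> int) : sigma8 c = re' (c 0) (c 1) (c 3) + 'i * im' (c 2) (c 1) (c 3).
Proof.
rewrite /sigma8 !big_ord_recl big_ord0 /=.
have L1 : lift ord0 ord0 = 1 :> 'I_4 by apply/val_inj.
have L2 : lift ord0 (lift ord0 ord0) = 2 :> 'I_4 by apply/val_inj.
have L3 : lift ord0 (lift ord0 (lift ord0 ord0)) = 3 :> 'I_4 by apply/val_inj.
rewrite L1 L2 L3 /bump /= expr0 expr1 sqrrN exprNn z2 z3 z1 /re' /im' (_ : ord0 = 0) //.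
rewrite (_ : (-1)^+3 = -1 :> algC); last by rewrite -signr_odd.
ring.
Qed.
Lemma normR (x y : algC) : x \is Num.real -> y \is Num.real ->
  (x + 'i * y) * (x + 'i * y)^* = x * x + y * y.
Proof.
move=> hx hy; rewrite conjC_rect //.
rewrite (_ : (x + 'i * y) * (x - 'i * y) = x * x + y * y - y * y * ('i * 'i + 1)); last by ring.
by rewrite ii addNr mulr0 subr0.
Qed.
Lemma int_real (x : int) : (x%:~R : algC) \is Num.real.
Proof. exact: rpred_int. Qed.
Lemma re_real x0 x1 x3 : re x0 x1 x3 \is Num.real.
Proof. by rewrite /re rpredD ?rpredM ?rpredB ?int_real ?tt_real. Qed.
Lemma im_real x0 x1 x3 : im x0 x1 x3 \is Num.real.
Proof. by rewrite /im rpredD ?rpredM ?rpredD ?int_real ?tt_real. Qed.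
Lemma re'_real x0 x1 x3 : re' x0 x1 x3 \is Num.real.
Proof. by rewrite /re' rpredB ?rpredM ?rpredB ?int_real ?tt_real. Qed.
Lemma im'_real x0 x1 x3 : im' x0 x1 x3 \is Num.real.
Proof. by rewrite /im' rpredB ?rpredM ?rpredD ?int_real ?tt_real. Qed.

Definition NN (x0 x1 x2 x3 : int) : int :=
  let A := x0*x0+x2*x2-x1*x1-x3*x3 in let B := (x1-x3)*x2-(x1+x3)*x0 in
  A*A + (B*B + B*B).

Lemma prodE x0 x1 x2 x3 :
  (re x0 x1 x3 * re x0 x1 x3 + im x2 x1 x3 * im x2 x1 x3) *
  (re' x0 x1 x3 * re' x0 x1 x3 + im' x2 x1 x3 * im' x2 x1 x3) = (NN x0 x1 x2 x3)%:~R.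
Proof.
rewrite /re /im /re' /im' /NN /=.
set X0 := x0%:~R; set X1 := x1%:~R; set X2 := x2%:~R; set X3 := x3%:~R.
rewrite (_ : (_ * _ + _) * _ = ((X0*X0+X2*X2) + ((X1-X3)*(X1-X3)+(X1+X3)*(X1+X3))*(tt*tt))^+2
   - 4*(X0*(X1-X3) + X2*(X1+X3))^+2*(tt*tt)); last by ring.
rewrite ttE !(intrD, intrB, intrM) -/X0 -/X1 -/X2 -/X3.
by field.
Qed.

Theorem mainTheorem2 (ca : 'I_4 -> int) (b0 b1 : int) :
  let a := Zz8 ca in
  let sa := sigma8 ca in
  let b := Zi b0 b1 in
  (a, b) != (0, 0) ->
  1 <= \det (adj_mx (Xmat a sa b) *m Xmat a sa b) /\
  \det (XS a b *m adj_mx (XS a b)) * \det (XT sa b *m adj_mx (XT sa b)) != 0.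
Proof.
move=> a sa b Hab.
rewrite detX detS detT.
have nae : a * a^* = re (ca 0) (ca 1) (ca 3) * re (ca 0) (ca 1) (ca 3)
     + im (ca 2) (ca 1) (ca 3) * im (ca 2) (ca 1) (ca 3).
  by rewrite /a Zz8E normR ?re_real ?im_real.
have nse : sa * sa^* = re' (ca 0) (ca 1) (ca 3) * re' (ca 0) (ca 1) (ca 3)
     + im' (ca 2) (ca 1) (ca 3) * im' (ca 2) (ca 1) (ca 3).
  by rewrite /sa sigma8E normR ?re'_real ?im'_real.
have nbe : b * b^* = (b0 * b0 + b1 * b1)%:~R.
  by rewrite /b /Zi (mulrC _ 'i) normR ?int_real // intrD !intrM.
have hna : 0 <= a * a^* := mul_conjC_ge0 a.
have hns : 0 <= sa * sa^* := mul_conjC_ge0 sa.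
have hnb : 0 <= b * b^* := mul_conjC_ge0 b.
have K : 1 <= b * b^* \/ 1 <= (a * a^*) * (sa * sa^*).
  case: (boolP ((b0 == 0) && (b1 == 0))) => hb; last first.
    by left; rewrite nbe ler1z; nia.
  right; rewrite nae nse prodE ler1z.
  case: (boolP (1 <= NN (ca 0) (ca 1) (ca 2) (ca 3))) => // /negP hn; exfalso.
  move: hn; rewrite /NN /=.
  set A := _ - _ - _; set B := _ - _ => hn.
  have hA : 0 <= A * A by nia.
  have hB : 0 <= B * B by nia.
  have hA0 : A * A = 0 by lia.
  have hB0 : B * B = 0 by lia.
  have A0 : A = 0 by nia.
  have B0 : B = 0 by nia.
  have E1 : ca 0 * ca 0 + ca 2 * ca 2 = ca 1 * ca 1 + ca 3 * ca 3 by rewrite /A in A0; lia.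
  have E2 : (ca 1 - ca 3) * ca 2 = (ca 1 + ca 3) * ca 0 by rewrite /B in B0; lia.
  have [] := descent (absz (ca 0 * ca 0 + ca 1 * ca 1 + ca 2 * ca 2 + ca 3 * ca 3))
     (ca 0) (ca 1) (ca 2) (ca 3) _ E1 E2; first by lia.
  move=> e0 e1 e2 e3.
  move: hb => /andP [/eqP eb0 /eqP eb1].
  move/negP: Hab; apply.
  rewrite /a /b Zz8E /re /im /Zi e0 e1 e2 e3 eb0 eb1 !mulr0z.
  by rewrite !(subrr, addr0, mul0r, mulr0).
split.
  rewrite (_ : _ - _ = ((a * a^*) * (sa * sa^*) + (b * b^*) * (b * b^*)) +
     ((b * b^*) * (b * b^*) + (a * a^*) * (b * b^*) + 3 * (sa * sa^*) * (b * b^*)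
      + (sa * sa^*) * (sa * sa^*))); last by ring.
  apply: ler_wpDr; first by move: hna hns hnb; generalize (a*a^*) (sa*sa^*) (b*b^*) => x y z hx hy hz; do ![apply: addr_ge0 | apply: mulr_ge0 | exact: ler0n].
  case: K => h.
    apply: ler_wpDl; first exact: mulr_ge0.
    exact: mulr_ege1.
  by apply: ler_wpDr; first exact: mulr_ge0.
have pos : forall x y : algC, 0 <= x -> 0 <= y -> x != 0 -> x + y != 0.
  move=> x y hx hy hx0; rewrite gt_eqF // ltr_pwDl //.
  by rewrite lt_def hx0 hx.
case: K => h.
  have nb0 : b * b^* != 0 by rewrite gt_eqF // (lt_le_trans ltr01 h).
  rewrite mulf_neq0 // ?expf_neq0 // addrC pos //.
have : a * a^* * (sa * sa^*) != 0 by rewrite gt_eqF // (lt_le_trans ltr01 h).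
rewrite mulf_eq0 negb_or => /andP [h1 h2].
by rewrite mulf_neq0 // ?expf_neq0 // pos.
Qed.
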